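(* For generic $x_0,x_1,\dots,x_L$, the six-vertex partition function with domain-wall boundaries satisfies, for every $0\le m\le L$, \[ \sum_{i=0}^L\rho_i^{(m)}\,Z(X_i^0)=0, \] where $X_0^0:=X$ and \[ \rho_i^{(m)}=\begin{cases}\dfrac{c(x_m-x_0)}{b(x_m-x_0)}\displaystyle\prod_{k=1}^Lb(x_0-\mu_k)\prod_{\substack{k=1\\k\ne m}}^L\frac{a(x_0-x_k)}{b(x_0-x_k)} & i=0,\ m\ne0,\\[2ex] \displaystyle\prod_{k=1}^La(x_m-\mu_k)-\prod_{k=1}^Lb(x_m-\mu_k)\prod_{\substack{k=0\\k\ne m}}^L\frac{a(x_m-x_k)}{b(x_m-x_k)} & i=m,\\[2ex] \dfrac{c(x_m-x_i)}{b(x_m-x_i)}\displaystyle\prod_{k=1}^Lb(x_i-\mu_k)\prod_{\substack{k=0\\k\ne i,m}}^L\frac{a(x_i-x_k)}{b(x_i-x_k)} & \text{otherwise.}\end{cases} \]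
   Context: Six-vertex setup. Fix $\gamma\in\mathbb C$, $L\ge1$ and $\mu_1,\dots,\mu_L\in\mathbb C$. Let $a(x)=\sinh(x+\gamma)$, $b(x)=\sinh x$, $c(x)=\sinh\gamma$ (constant). With $v_1,v_2$ the standard basis of $\mathbb C^2$, let $R(x)$ be the matrix on $\mathbb C^2\otimes\mathbb C^2$ which in the ordered basis $v_1\otimes v_1,v_1\otimes v_2,v_2\otimes v_1,v_2\otimes v_2$ is $\begin{pmatrix}a(x)&0&0&0\\0&b(x)&c(x)&0\\0&c(x)&b(x)&0\\0&0&0&a(x)\end{pmatrix}$. On $\mathbb C^2_0\otimes(\mathbb C^2)^{\otimes L}$, let $T_0(x)=R_{01}(x-\mu_1)R_{02}(x-\mu_2)\cdots R_{0L}(x-\mu_L)$ (with $R_{0i}$ acting on the auxiliary factor $0$ and quantum factor $i$), written in the auxiliary space as $\begin{pmatrix}A(x)&B(x)\\C(x)&D(x)\end{pmatrix}$. With $|0\rangle=v_1^{\otimes L}$ and $\langle\bar0|=(v_2^* )^{\otimes L}$, the partition function of the six-vertex model with domain-wall boundaries is $Z(x_1,\dots,x_L)=\langle\bar0|B(x_1)B(x_2)\cdots B(x_L)|0\rangle$. Notation: $X=(x_1,\dots,x_L)$; for $1\le i\le L$, $X_i^0$ is $X$ with $x_i$ replaced by $x_0$. *)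

(* Defs.v *)
From Stdlib Require Import Reals List Bool Arith.
Import ListNotations.
Open Scope R_scope.

Record Cx := mkC { Re : R; Im : R }.

Definition C0 : Cx := mkC 0 0.
Definition C1 : Cx := mkC 1 0.
Definition Cadd (z w : Cx) : Cx := mkC (Re z + Re w) (Im z + Im w).
Definition Copp (z : Cx) : Cx := mkC (- Re z) (- Im z).
Definition Csub (z w : Cx) : Cx := Cadd z (Copp w).
Definition Cmul (z w : Cx) : Cx :=
  mkC (Re z * Re w - Im z * Im w) (Re z * Im w + Im z * Re w).
Definition Cinv (z : Cx) : Cx :=
  mkC (Re z / (Re z * Re z + Im z * Im z)) (- Im z / (Re z * Re z + Im z * Im z)).
Definition Cdiv (z w : Cx) : Cx := Cmul z (Cinv w).

Definition Cexp (z : Cx) : Cx := mkC (exp (Re z) * cos (Im z)) (exp (Re z) * sin (Im z)).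
Definition Csinh (z : Cx) : Cx := Cmul (Csub (Cexp z) (Cexp (Copp z))) (mkC (1/2) 0).

Definition Csum (l : list Cx) : Cx := fold_right Cadd C0 l.
Definition Cprod (l : list Cx) : Cx := fold_right Cmul C1 l.

Definition wa (g x : Cx) : Cx := Csinh (Cadd x g).
Definition wb (g x : Cx) : Cx := Csinh x.
Definition wc (g x : Cx) : Cx := Csinh g.

(** Spins: [false] = v_1, [true] = v_2.
    [Rel g x a s a' s'] = < v_a (x) v_s | R(x) | v_a' (x) v_s' >, first factor auxiliary. *)
Definition Rel (g x : Cx) (a s a' s' : bool) : Cx :=
  if Bool.eqb a s then
    (if Bool.eqb a' a && Bool.eqb s' s then wa g x else C0)
  else if Bool.eqb a' a && Bool.eqb s' s then wb g x
  else if Bool.eqb a' s && Bool.eqb s' a then wc g x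
  else C0.

(** Matrix elements < v_a (x) v_s | T_0(x) | v_b (x) v_s' > of the monodromy matrix
    T_0(x) = R_01(x-mu_1) ... R_0n(x-mu_n), with quantum states given as lists of spins. *)
Fixpoint Tel (g x : Cx) (mus : list Cx) (a b : bool) (s s' : list bool) : Cx :=
  match mus, s, s' with
  | [], [], [] => if Bool.eqb a b then C1 else C0
  | mu :: mus', t :: ts, t' :: ts' =>
      Csum (map (fun c => Cmul (Rel g (Csub x mu) a t c t') (Tel g x mus' c b ts ts'))
                [false; true])
  | _, _, _ => C0
  end.

(** B(x) = upper-right entry (aux v_1 -> v_2 row/column) *)
Definition Bel (g x : Cx) (mus : list Cx) (s s' : list bool) : Cx :=
  Tel g x mus false true s s'.

Fixpoint states (n : nat) : list (list bool) :=
  match n with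
  | O => [[]]
  | S n' => flat_map (fun s => [false :: s; true :: s]) (states n')
  end.

Definition applyB (g x : Cx) (mus : list Cx) (v : list bool -> Cx) : list bool -> Cx :=
  fun s => Csum (map (fun s' => Cmul (Bel g x mus s s') (v s')) (states (length mus))).

Definition vac (L : nat) : list bool -> Cx :=
  fun s => if list_eq_dec Bool.bool_dec s (repeat false L) then C1 else C0.

Definition muList (L : nat) (mu : nat -> Cx) : list Cx := map mu (seq 1 L).

(** Z(y_1,...,y_L) = < 0bar | B(y_1) ... B(y_L) | 0 >, with <0bar| = (v_2^* )^{(x) L} *)
Definition Zdw (g : Cx) (L : nat) (mu : nat -> Cx) (y : nat -> Cx) : Cx :=
  (fold_right (fun k v => applyB g (y k) (muList L mu) v) (vac L) (seq 1 L))
    (repeat true L).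

(** X_i^0 : x_i replaced by x_0 (for i = 0 this is X itself on indices 1..L) *)
Definition Xrep (x : nat -> Cx) (i : nat) : nat -> Cx :=
  fun k => if Nat.eqb k i then x 0%nat else x k.

Definition ab (g x : Cx) : Cx := Cdiv (wa g x) (wb g x).

Definition rho (g : Cx) (L : nat) (mu x : nat -> Cx) (m i : nat) : Cx :=
  if Nat.eqb i m then
    Csub (Cprod (map (fun k => wa g (Csub (x m) (mu k))) (seq 1 L)))
         (Cmul (Cprod (map (fun k => wb g (Csub (x m) (mu k))) (seq 1 L)))
               (Cprod (map (fun k => ab g (Csub (x m) (x k)))
                           (filter (fun k => negb (Nat.eqb k m)) (seq 0 (S L))))))
  else if Nat.eqb i 0 then
    Cmul (Cdiv (wc g (Csub (x m) (x 0%nat))) (wb g (Csub (x m) (x 0%nat))))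
      (Cmul (Cprod (map (fun k => wb g (Csub (x 0%nat) (mu k))) (seq 1 L)))
            (Cprod (map (fun k => ab g (Csub (x 0%nat) (x k)))
                        (filter (fun k => negb (Nat.eqb k m)) (seq 1 L)))))
  else
    Cmul (Cdiv (wc g (Csub (x m) (x i))) (wb g (Csub (x m) (x i))))
      (Cmul (Cprod (map (fun k => wb g (Csub (x i) (mu k))) (seq 1 L)))
            (Cprod (map (fun k => ab g (Csub (x i) (x k)))
                        (filter (fun k => negb (Nat.eqb k i) && negb (Nat.eqb k m))
                                (seq 0 (S L)))))).

(* Main.v *)
Require Import Defs.
From Stdlib Require Import Reals List Bool Arith.
Import ListNotations.
From Stdlib Require Import Lra Lia Field Ring Classical Permutation FinFun FunctionalExtensionality.
Open Scope R_scope.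

Lemma Cx_eq (z w : Cx) : Re z = Re w -> Im z = Im w -> z = w.
Proof. destruct z, w; simpl; intros; subst; reflexivity. Qed.

Ltac cx := intros; repeat match goal with z : Cx |- _ => destruct z end;
  apply Cx_eq; unfold Cadd, Cmul, Copp, Csub, C0, Defs.C1; simpl; ring.

Lemma Cring : ring_theory C0 Defs.C1 Cadd Cmul Csub Copp (@eq Cx).
Proof. constructor; try cx. Qed.

Lemma Cfield : field_theory C0 Defs.C1 Cadd Cmul Csub Copp Cdiv Cinv (@eq Cx).
Proof.
  constructor. exact Cring.
  intro H. injection H. lra. reflexivity.
  intros [a b] H. apply Cx_eq; unfold Cinv, Cmul, Defs.C1; simpl.
  - assert (a*a+b*b <> 0).
    { intro E. apply H. assert (a = 0) by nra. assert (b = 0) by nra. subst. reflexivity. }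
    field. auto.
  - assert (a*a+b*b <> 0).
    { intro E. apply H. assert (a = 0) by nra. assert (b = 0) by nra. subst. reflexivity. }
    field. auto.
Qed.
Add Field Cfield : Cfield.

Goal forall a b c : Cx, c <> C0 -> Cdiv (Cmul a c) c = Csub (Cadd a b) b.
intros. field. auto. Qed.

Lemma Cexp_add z w : Cexp (Cadd z w) = Cmul (Cexp z) (Cexp w).
Proof. destruct z as [a b], w as [c d]. apply Cx_eq; unfold Cexp, Cmul; simpl;
  rewrite exp_plus; [rewrite cos_plus | rewrite sin_plus]; ring. Qed.

Lemma Cexp_nz z : Cexp z <> C0.
Proof. destruct z as [a b]. unfold Cexp, C0. intro H. injection H. intros H1 H2.
  pose proof (exp_pos a). pose proof (sin2_cos2 b). unfold Rsqr in *.
  assert (cos b = 0). { apply Rmult_eq_reg_l with (exp a); lra. }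
  assert (sin b = 0). { apply Rmult_eq_reg_l with (exp a); lra. }
  nra. Qed.

Lemma Cexp_opp z : Cexp (Copp z) = Cinv (Cexp z).
Proof.
  assert (H : Cmul (Cexp (Copp z)) (Cexp z) = Defs.C1).
  { rewrite <- Cexp_add. destruct z as [a b]. apply Cx_eq; unfold Cexp, Defs.C1; simpl;
    replace (-a+a) with 0 by ring; replace (-b+b) with 0 by ring;
    rewrite ?exp_0, ?cos_0, ?sin_0; ring. }
  pose proof (Cexp_nz z).
  transitivity (Cdiv (Cmul (Cexp (Copp z)) (Cexp z)) (Cexp z)). field; auto.
  rewrite H. field; auto. Qed.

Lemma Cexp_sub z w : Cexp (Csub z w) = Cdiv (Cexp z) (Cexp w).
Proof. unfold Csub. rewrite Cexp_add, Cexp_opp. reflexivity. Qed.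

Definition hh : Cx := mkC (1/2) 0.
Lemma hh_nz : hh <> C0.
Proof. unfold hh, C0. intro H; injection H; lra. Qed.

Lemma Csinh_E z : Csinh z = Cmul (Csub (Cexp z) (Cinv (Cexp z))) hh.
Proof. unfold Csinh. rewrite Cexp_opp. reflexivity. Qed.

Ltac to_exp := unfold wa, wb, wc in *; rewrite ?Csinh_E in *;
  repeat (rewrite ?Cexp_add, ?Cexp_sub, ?Cexp_opp in * ).

Ltac nzs := repeat split; try apply Cexp_nz; try apply hh_nz.

Definition bsum (f : bool -> Cx) : Cx := Cadd (f false) (f true).

Lemma YBE g x y mu a b t c' d' t'' :
  bsum (fun c => bsum (fun d => bsum (fun t1 =>
    Cmul (Cmul (Rel g (Csub x y) a b c d) (Rel g (Csub x mu) c t c' t1)) (Rel g (Csub y mu) d t1 d' t'')))) =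
  bsum (fun c => bsum (fun d => bsum (fun t1 =>
    Cmul (Cmul (Rel g (Csub y mu) b t d t1) (Rel g (Csub x mu) a t1 c t'')) (Rel g (Csub x y) c d c' d')))).
Proof.
  destruct a, b, t, c', d', t''; unfold bsum, Rel; cbn [Bool.eqb andb negb];
  to_exp; field; nzs.
Qed.

Lemma bsum_ext f h : (forall c, f c = h c) -> bsum f = bsum h.
Proof. intros H; unfold bsum; rewrite !H; reflexivity. Qed.

Section Key.
Variables (g x y mu : Cx) (a b t e f : bool).
Let R := Rel g (Csub x y).
Let Rx := Rel g (Csub x mu).
Let Ry := Rel g (Csub y mu).

Lemma key_alg (P : bool -> bool -> bool -> Cx) (Q : bool -> bool -> bool -> bool -> bool -> Cx) :
  (forall c d t2, bsum (fun c' => bsum (fun d' => Cmul (R c d c' d') (P c' d' t2))) =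
                  bsum (fun c' => bsum (fun d' => Cmul (R c' d' e f) (Q d d' c c' t2)))) ->
  bsum (fun c => bsum (fun d => Cmul (R a b c d)
     (bsum (fun c' => bsum (fun t1 => Cmul (Rx c t c' t1)
        (bsum (fun d' => bsum (fun t2 => Cmul (Ry d t1 d' t2) (P c' d' t2))))))))) =
  bsum (fun c' => bsum (fun d' => Cmul (R c' d' e f)
     (bsum (fun d => bsum (fun t1 => Cmul (Ry b t d t1)
        (bsum (fun c => bsum (fun t2 => Cmul (Rx a t1 c t2) (Q d d' c c' t2))))))))).
Proof.
  intros IH.
  transitivity (bsum (fun c' => bsum (fun d' => bsum (fun t2 =>
     Cmul (bsum (fun c => bsum (fun d => bsum (fun t1 =>
       Cmul (Cmul (R a b c d) (Rx c t c' t1)) (Ry d t1 d' t2))))) (P c' d' t2))))).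
  { unfold bsum; ring. }
  transitivity (bsum (fun c' => bsum (fun d' => bsum (fun t2 =>
     Cmul (bsum (fun c => bsum (fun d => bsum (fun t1 =>
       Cmul (Cmul (Ry b t d t1) (Rx a t1 c t2)) (R c d c' d'))))) (P c' d' t2))))).
  { apply bsum_ext; intro c'; apply bsum_ext; intro d'; apply bsum_ext; intro t2.
    unfold R, Rx, Ry; rewrite YBE; reflexivity. }
  transitivity (bsum (fun t2 => bsum (fun c => bsum (fun d =>
     Cmul (bsum (fun t1 => Cmul (Ry b t d t1) (Rx a t1 c t2)))
      (bsum (fun c' => bsum (fun d' => Cmul (R c d c' d') (P c' d' t2)))))))).
  { unfold bsum; ring. }
  transitivity (bsum (fun t2 => bsum (fun c => bsum (fun d =>
     Cmul (bsum (fun t1 => Cmul (Ry b t d t1) (Rx a t1 c t2)))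
      (bsum (fun c' => bsum (fun d' => Cmul (R c' d' e f) (Q d d' c c' t2)))))))).
  { apply bsum_ext; intro t2; apply bsum_ext; intro c; apply bsum_ext; intro d.
    rewrite IH; reflexivity. }
  unfold bsum; ring.
Qed.
End Key.

Lemma Csum_map_add {A} (F G : A -> Cx) l :
  Csum (map (fun s => Cadd (F s) (G s)) l) = Cadd (Csum (map F l)) (Csum (map G l)).
Proof. induction l; simpl. unfold C0, Cadd; apply Cx_eq; simpl; ring.
  rewrite IHl. ring. Qed.

Lemma Csum_map_scal {A} k (F : A -> Cx) l :
  Csum (map (fun s => Cmul k (F s)) l) = Cmul k (Csum (map F l)).
Proof. induction l; simpl. ring. rewrite IHl. ring. Qed.

Lemma Csum_map_ext {A} (F G : A -> Cx) l :
  (forall s, In s l -> F s = G s) -> Csum (map F l) = Csum (map G l).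
Proof. intros H; rewrite (map_ext_in F G l H); reflexivity. Qed.

Lemma Csum_map_bsum {A} (F : bool -> A -> Cx) l :
  Csum (map (fun s => bsum (fun c => F c s)) l) = bsum (fun c => Csum (map (F c) l)).
Proof. unfold bsum. apply Csum_map_add. Qed.

Lemma Csum_app l1 l2 : Csum (l1 ++ l2) = Cadd (Csum l1) (Csum l2).
Proof. induction l1; simpl. ring. rewrite IHl1; ring. Qed.

Lemma states_sum n (F : list bool -> Cx) :
  Csum (map F (states (S n))) = Csum (map (fun s => bsum (fun c => F (c :: s))) (states n)).
Proof.
  simpl. induction (states n); simpl. reflexivity.
  rewrite IHl. unfold bsum. ring.
Qed.

Definition V := list bool -> Cx.

Definition applyT g x mus a b (v : V) : V :=
  fun s => Csum (map (fun s' => Cmul (Tel g x mus a b s s') (v s')) (states (length mus))).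

Lemma applyT_cons g x mu mus a b v t ts :
  applyT g x (mu :: mus) a b v (t :: ts) =
  bsum (fun c => bsum (fun t1 => Cmul (Rel g (Csub x mu) a t c t1)
        (applyT g x mus c b (fun ss => v (t1 :: ss)) ts))).
Proof.
  unfold applyT. cbn [length]. rewrite states_sum.
  transitivity (Csum (map (fun s => bsum (fun c => bsum (fun t1 =>
     Cmul (Rel g (Csub x mu) a t c t1) (Cmul (Tel g x mus c b ts s) (v (t1 :: s))))))
     (states (length mus)))).
  { apply Csum_map_ext; intros s _. cbn [Tel map Csum fold_right]. unfold bsum. ring. }
  rewrite Csum_map_bsum. apply bsum_ext; intro c.
  rewrite Csum_map_bsum. apply bsum_ext; intro t1.
  apply Csum_map_scal.
Qed.

Lemma applyT_nil_cons g x mu mus a b v : applyT g x (mu :: mus) a b v [] = C0.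
Proof.
  unfold applyT. transitivity (Csum (map (fun _ => C0) (states (length (mu::mus))))).
  { apply Csum_map_ext. intros s' _. destruct s'; cbn [Tel]; ring. }
  induction (states (length (mu::mus))); simpl; auto. rewrite IHl. unfold C0, Cadd; apply Cx_eq; simpl; ring.
Qed.

Lemma applyT_nil g x a b v s :
  applyT g x [] a b v s = match s with [] => Cmul (if Bool.eqb a b then Defs.C1 else C0) (v []) | _ => C0 end.
Proof. unfold applyT; simpl. destruct s; simpl; ring. Qed.

Lemma applyT_add g x mus a b v w s :
  applyT g x mus a b (fun z => Cadd (v z) (w z)) s = Cadd (applyT g x mus a b v s) (applyT g x mus a b w s).
Proof. unfold applyT. rewrite <- Csum_map_add. apply Csum_map_ext; intros; ring. Qed.

Lemma applyT_scal g x mus a b k v s :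
  applyT g x mus a b (fun z => Cmul k (v z)) s = Cmul k (applyT g x mus a b v s).
Proof. unfold applyT. rewrite <- Csum_map_scal. apply Csum_map_ext; intros; ring. Qed.

Lemma applyT_ext g x mus a b v w s :
  (forall z, v z = w z) -> applyT g x mus a b v s = applyT g x mus a b w s.
Proof. intros H. unfold applyT. apply Csum_map_ext; intros; rewrite H; reflexivity. Qed.

Lemma applyT_bsum g x mus a b (F : bool -> V) s :
  applyT g x mus a b (fun z => bsum (fun c => F c z)) s = bsum (fun c => applyT g x mus a b (F c) s).
Proof. unfold bsum. apply applyT_add. Qed.

Lemma applyT_lin g x mus a b (k : bool -> bool -> Cx) (F : bool -> bool -> V) s :
  applyT g x mus a b (fun z => bsum (fun c => bsum (fun d => Cmul (k c d) (F c d z)))) s =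
  bsum (fun c => bsum (fun d => Cmul (k c d) (applyT g x mus a b (F c d) s))).
Proof.
  rewrite applyT_bsum. apply bsum_ext; intro c.
  rewrite applyT_bsum. apply bsum_ext; intro d. apply applyT_scal.
Qed.

Lemma RTT g x y mus : forall a b e f v s,
  bsum (fun c => bsum (fun d => Cmul (Rel g (Csub x y) a b c d) (applyT g x mus c e (applyT g y mus d f v) s))) =
  bsum (fun c => bsum (fun d => Cmul (Rel g (Csub x y) c d e f) (applyT g y mus b d (applyT g x mus a c v) s))).
Proof.
  induction mus as [|mu mus IH]; intros a b e f v s.
  - unfold bsum. rewrite !applyT_nil. destruct s.
    + destruct a, b, e, f; unfold Rel; cbn [Bool.eqb andb]; ring.
    + ring.
  - destruct s as [|t ts].
    + unfold bsum. rewrite !applyT_nil_cons. ring.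
    + transitivity (bsum (fun c => bsum (fun d => Cmul (Rel g (Csub x y) a b c d)
       (bsum (fun c' => bsum (fun t1 => Cmul (Rel g (Csub x mu) c t c' t1)
         (bsum (fun d' => bsum (fun t2 => Cmul (Rel g (Csub y mu) d t1 d' t2)
           (applyT g x mus c' e (applyT g y mus d' f (fun ss => v (t2 :: ss))) ts)))))))))).
      { apply bsum_ext; intro c; apply bsum_ext; intro d. f_equal.
        rewrite applyT_cons. apply bsum_ext; intro c'; apply bsum_ext; intro t1. f_equal.
        erewrite applyT_ext; [| intro z; apply applyT_cons].
        apply applyT_lin. }
      transitivity (bsum (fun c' => bsum (fun d' => Cmul (Rel g (Csub x y) c' d' e f)
       (bsum (fun d => bsum (fun t1 => Cmul (Rel g (Csub y mu) b t d t1)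
         (bsum (fun c => bsum (fun t2 => Cmul (Rel g (Csub x mu) a t1 c t2)
           (applyT g y mus d d' (applyT g x mus c c' (fun ss => v (t2 :: ss))) ts)))))))))).
      { apply (key_alg g x y mu a b t e f
           (fun c' d' t2 => applyT g x mus c' e (applyT g y mus d' f (fun ss => v (t2 :: ss))) ts)
           (fun d d' c c' t2 => applyT g y mus d d' (applyT g x mus c c' (fun ss => v (t2 :: ss))) ts)).
        intros c d t2. apply IH. }
      apply bsum_ext; intro c'; apply bsum_ext; intro d'. f_equal.
      rewrite applyT_cons. apply bsum_ext; intro d; apply bsum_ext; intro t1. f_equal.
      erewrite applyT_ext; [| intro z; apply applyT_cons].
      symmetry. apply applyT_lin.
Qed.

Lemma ct_plus f1 f2 : continuity f1 -> continuity f2 -> continuity (fun t => f1 t + f2 t).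
Proof. intros; apply (continuity_plus f1 f2); auto. Qed.
Lemma ct_mult f1 f2 : continuity f1 -> continuity f2 -> continuity (fun t => f1 t * f2 t).
Proof. intros; apply (continuity_mult f1 f2); auto. Qed.
Lemma ct_opp f1 : continuity f1 -> continuity (fun t => - f1 t).
Proof. intros; apply (continuity_opp f1); auto. Qed.
Lemma ct_const c : continuity (fun _ => c).
Proof. apply continuity_const. intros ? ?; reflexivity. Qed.
Lemma ct_comp f1 f2 : continuity f1 -> continuity f2 -> continuity (fun t => f2 (f1 t)).
Proof. intros; apply (continuity_comp f1 f2); auto. Qed.
Lemma ct_id : continuity (fun t => t).
Proof. apply derivable_continuous, derivable_id. Qed.
Lemma ct_div f1 f2 : continuity f1 -> continuity f2 -> (forall t, f2 t <> 0) -> continuity (fun t => f1 t / f2 t).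
Proof. intros H1 H2 H3 t. apply (continuity_pt_div f1 f2); auto. Qed.

Definition CC (F : R -> Cx) := continuity (fun t => Re (F t)) /\ continuity (fun t => Im (F t)).

Lemma CC_const c : CC (fun _ => c).
Proof. split; apply ct_const. Qed.
Lemma CC_add F G : CC F -> CC G -> CC (fun t => Cadd (F t) (G t)).
Proof. intros [] []; split; simpl; apply ct_plus; auto. Qed.
Lemma CC_mul F G : CC F -> CC G -> CC (fun t => Cmul (F t) (G t)).
Proof. intros [] []; split; simpl.
  apply ct_plus; [apply ct_mult; auto| apply ct_opp, ct_mult; auto].
  apply ct_plus; apply ct_mult; auto. Qed.
Lemma CC_opp F : CC F -> CC (fun t => Copp (F t)).
Proof. intros []; split; simpl; apply ct_opp; auto. Qed.
Lemma CC_sub F G : CC F -> CC G -> CC (fun t => Csub (F t) (G t)).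
Proof. intros; apply CC_add; auto; apply CC_opp; auto. Qed.
Lemma CC_exp F : CC F -> CC (fun t => Cexp (F t)).
Proof. intros []; split; simpl; apply ct_mult;
  try apply (ct_comp _ exp); try apply (ct_comp _ cos); try apply (ct_comp _ sin); auto;
  try apply derivable_continuous, derivable_exp; try apply continuity_cos; try apply continuity_sin. Qed.
Lemma CC_sinh F : CC F -> CC (fun t => Csinh (F t)).
Proof. intros. unfold Csinh. apply CC_mul; [apply CC_sub; apply CC_exp; auto; apply CC_opp; auto | apply CC_const]. Qed.
Lemma CC_shift y : CC (fun t => Cadd y (mkC t 0)).
Proof. split; simpl; [apply ct_plus; [apply ct_const| apply ct_id] | apply ct_plus; apply ct_const]. Qed.

Lemma CC_Rel g X a s a' s' : CC X -> CC (fun t => Rel g (X t) a s a' s').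
Proof.
  intros HX. unfold Rel, wa, wb, wc.
  destruct (Bool.eqb a s), (Bool.eqb a' a && Bool.eqb s' s), (Bool.eqb a' s && Bool.eqb s' a);
  try apply CC_const; apply CC_sinh; try apply CC_add; auto; apply CC_const.
Qed.

Lemma CC_Csum {A} (F : R -> A -> Cx) l : (forall s, CC (fun t => F t s)) -> CC (fun t => Csum (map (F t) l)).
Proof. intros H. induction l; simpl. apply CC_const. apply CC_add; auto. Qed.

Lemma CC_Tel g X mus : CC X -> forall a b s s', CC (fun t => Tel g (X t) mus a b s s').
Proof.
  intros HX. induction mus as [|mu mus IH]; intros a b s s'.
  - destruct s, s'; simpl; apply CC_const.
  - destruct s as [|t0 ts], s' as [|t1 ts']; simpl; try apply CC_const.
    repeat first [apply CC_const | apply IH | apply CC_add | apply CC_mul | apply CC_Rel, CC_sub; [auto | apply CC_const]].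
Qed.

Lemma CC_applyT g X mus a b (W : R -> V) s : CC X -> (forall s', CC (fun t => W t s')) ->
  CC (fun t => applyT g (X t) mus a b (W t) s).
Proof. intros HX HW. unfold applyT. apply (CC_Csum (fun t s' => Cmul (Tel g (X t) mus a b s s') (W t s'))).
  intros s'. apply CC_mul; auto. apply CC_Tel; auto. Qed.

Lemma ct_zero f : continuity f -> (forall t, t <> 0 -> f t = 0) -> f 0 = 0.
Proof.
  intros Hc Hz. destruct (Req_dec (f 0) 0) as [|Hn]; auto. exfalso.
  destruct (Hc 0 (Rabs (f 0)) ltac:(apply Rabs_pos_lt; auto)) as [alp [Ha Hb]].
  specialize (Hb (alp/2)). simpl in Hb. unfold R_dist in Hb.
  rewrite Hz in Hb by lra. 
  assert (Rabs (0 - f 0) < Rabs (f 0)). { apply Hb. split. split. constructor. lra. rewrite Rminus_0_r, Rabs_right; lra. }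
  rewrite Rabs_minus_sym, Rminus_0_r in H. lra.
Qed.

Lemma CC_zero F : CC F -> (forall t, t <> 0 -> F t = C0) -> F 0 = C0.
Proof. intros [H1 H2] Hz. apply Cx_eq; simpl.
  apply (ct_zero (fun t => Re (F t))); auto. intros; rewrite Hz; auto.
  apply (ct_zero (fun t => Im (F t))); auto. intros; rewrite Hz; auto. Qed.

Definition Bop g x mus := applyT g x mus false true.
Definition Dop g x mus := applyT g x mus true true.

Lemma BB_a g x y mus v s :
  Cmul (wa g (Csub x y)) (Bop g x mus (Bop g y mus v) s) = Cmul (wa g (Csub x y)) (Bop g y mus (Bop g x mus v) s).
Proof.
  pose proof (RTT g x y mus false false true true v s) as H.
  unfold bsum, Rel in H; cbn [Bool.eqb andb] in H. unfold Bop.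
  lazymatch type of H with ?A = ?B => transitivity A; [ring | rewrite H; ring] end.
Qed.

Lemma DB_rel g x y mus v s :
  Cadd (Cmul (wb g (Csub x y)) (Dop g x mus (Bop g y mus v) s))
       (Cmul (wc g (Csub x y)) (Bop g x mus (Dop g y mus v) s)) =
  Cmul (wa g (Csub x y)) (Bop g y mus (Dop g x mus v) s).
Proof.
  pose proof (RTT g x y mus true false true true v s) as H.
  unfold bsum, Rel in H; cbn [Bool.eqb andb] in H. unfold Bop, Dop.
  lazymatch type of H with ?A = ?B => transitivity A; [ring | rewrite H; ring] end.
Qed.

Lemma sinh_shift w t : Csinh w = C0 -> t <> 0 -> Csinh (Csub w (mkC t 0)) <> C0.
Proof.
  intros H Ht H2. rewrite Csinh_E in H, H2. rewrite Cexp_sub in H2.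
  set (E := Cexp w) in *. set (T := Cexp (mkC t 0)) in *.
  assert (HE : E <> C0) by apply Cexp_nz. assert (HT : T <> C0) by apply Cexp_nz.
  pose proof hh_nz.
  assert (E1 : Cmul E E = Defs.C1).
  { replace (Cmul E E) with (Cadd (Cdiv (Cmul (Cmul (Csub E (Cinv E)) hh) E) hh) Defs.C1) by (field; auto).
    rewrite H. field; auto. }
  assert (E2 : Cmul E E = Cmul T T).
  { replace (Cmul E E) with (Cadd (Cdiv (Cmul (Cmul (Cmul (Csub (Cdiv E T) (Cinv (Cdiv E T))) hh) E) T) hh) (Cmul T T)) by (field; auto).
    rewrite H2. field; auto. }
  rewrite E1 in E2. unfold T, Cexp in E2; simpl in E2. rewrite cos_0, sin_0 in E2.
  injection E2. intros _ E3.
  assert (E4 : exp t * exp t = 1) by lra. rewrite <- exp_plus in E4.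
  assert (t + t = 0). { apply exp_inv. rewrite exp_0. lra. } lra.
Qed.

Lemma BB g x y mus v s : Bop g x mus (Bop g y mus v) s = Bop g y mus (Bop g x mus v) s.
Proof.
  destruct (Req_dec 0 0) as [_|]; [|lra].
  assert (Hy : forall t, t = 0 -> Cadd y (mkC t 0) = y).
  { intros t ->. destruct y; apply Cx_eq; simpl; ring. }
  set (F := fun t => Csub (Bop g x mus (Bop g (Cadd y (mkC t 0)) mus v) s)
                          (Bop g (Cadd y (mkC t 0)) mus (Bop g x mus v) s)).
  assert (HF : F 0 = C0).
  { destruct (classic (wa g (Csub x y) = C0)) as [Ha|Ha].
    - apply CC_zero.
      + unfold F, Bop. apply CC_sub; apply CC_applyT; try apply CC_shift; try apply CC_const.
        * intro s'. apply CC_applyT. apply CC_shift. intros; apply CC_const.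
        * intros; apply CC_const.
      + intros t Ht. unfold F.
        assert (Hn : wa g (Csub x (Cadd y (mkC t 0))) <> C0).
        { unfold wa in *. replace (Cadd (Csub x (Cadd y (mkC t 0))) g) with (Csub (Cadd (Csub x y) g) (mkC t 0)) by ring.
          apply sinh_shift; auto. }
        pose proof (BB_a g x (Cadd y (mkC t 0)) mus v s) as E.
        transitivity (Cdiv (Csub (Cmul (wa g (Csub x (Cadd y (mkC t 0)))) (Bop g x mus (Bop g (Cadd y (mkC t 0)) mus v) s))
                                  (Cmul (wa g (Csub x (Cadd y (mkC t 0)))) (Bop g (Cadd y (mkC t 0)) mus (Bop g x mus v) s)))
                        (wa g (Csub x (Cadd y (mkC t 0))))).
        field; auto. rewrite E. field; auto.
    - unfold F. rewrite Hy by reflexivity. pose proof (BB_a g x y mus v s) as E.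
      transitivity (Cdiv (Csub (Cmul (wa g (Csub x y)) (Bop g x mus (Bop g y mus v) s))
                                (Cmul (wa g (Csub x y)) (Bop g y mus (Bop g x mus v) s))) (wa g (Csub x y))).
      field; auto. rewrite E. field; auto. }
  unfold F in HF. rewrite Hy in HF by reflexivity.
  transitivity (Cadd (Csub (Bop g x mus (Bop g y mus v) s) (Bop g y mus (Bop g x mus v) s)) (Bop g y mus (Bop g x mus v) s)).
  ring. rewrite HF. ring.
Qed.

Lemma vac_nil : vac 0 [] = Defs.C1.
Proof. unfold vac. destruct (list_eq_dec Bool.bool_dec [] (repeat false 0)); [reflexivity | exfalso; auto]. Qed.
Lemma vac_0_cons t ts : vac 0 (t :: ts) = C0.
Proof. unfold vac. destruct (list_eq_dec Bool.bool_dec (t::ts) (repeat false 0)); [discriminate | reflexivity]. Qed.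
Lemma vac_S_nil n : vac (S n) [] = C0.
Proof. unfold vac. destruct (list_eq_dec Bool.bool_dec [] (repeat false (S n))); [discriminate | reflexivity]. Qed.
Lemma vac_S n t ts : vac (S n) (t :: ts) = if t then C0 else vac n ts.
Proof. unfold vac. simpl. destruct t.
  - destruct (list_eq_dec Bool.bool_dec (true :: ts) (false :: repeat false n)) as [E|E]; [discriminate E | reflexivity].
  - destruct (list_eq_dec Bool.bool_dec (false :: ts) (false :: repeat false n)) as [E|E];
    destruct (list_eq_dec Bool.bool_dec ts (repeat false n)) as [E2|E2];
    [reflexivity | injection E; intros; contradiction | subst; contradiction | reflexivity].
Qed.

Lemma applyT_zero g x mus a b s : applyT g x mus a b (fun _ => C0) s = C0.
Proof. unfold applyT. induction (states (length mus)); simpl. reflexivity. rewrite IHl. ring. Qed.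

Lemma Cprod_nil : Cprod [] = Defs.C1.
Proof. reflexivity. Qed.
Lemma Cprod_cons a l : Cprod (a :: l) = Cmul a (Cprod l).
Proof. reflexivity. Qed.

Lemma D_top g x mus v :
  Dop g x mus v (repeat true (length mus)) =
  Cmul (Cprod (map (fun mu => wa g (Csub x mu)) mus)) (v (repeat true (length mus))).
Proof.
  revert v. induction mus as [|mu mus IH]; intros v.
  - unfold Dop. rewrite applyT_nil. cbn [Bool.eqb repeat length map]; rewrite ?Cprod_nil. ring.
  - unfold Dop in *. cbn [length repeat]. rewrite applyT_cons. unfold bsum, Rel; cbn [Bool.eqb andb].
    rewrite (IH (fun ss => v (true :: ss))). cbn [map]. rewrite Cprod_cons. ring.
Qed.

Lemma D_vac g x mus s :
  Dop g x mus (vac (length mus)) s = Cmul (Cprod (map (fun mu => wb g (Csub x mu)) mus)) (vac (length mus) s).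
Proof.
  revert s. induction mus as [|mu mus IH]; intros s.
  - unfold Dop. rewrite applyT_nil. destruct s; cbn [Bool.eqb repeat length map]; rewrite ?Cprod_nil; [rewrite vac_nil| rewrite vac_0_cons]; ring.
  - unfold Dop in *. cbn [length]. destruct s as [|t ts].
    + rewrite applyT_nil_cons, vac_S_nil. ring.
    + rewrite applyT_cons. rewrite vac_S.
      unfold bsum.
      rewrite (applyT_ext g x mus _ _ (fun ss => vac (S (length mus)) (true :: ss)) (fun _ => C0)) by (intros; rewrite vac_S; reflexivity).
      rewrite !(applyT_ext g x mus _ _ (fun ss => vac (S (length mus)) (false :: ss)) (vac (length mus))) by (intros; rewrite vac_S; reflexivity).
      rewrite !applyT_zero.
      destruct t; unfold Rel; cbn [Bool.eqb andb map].
      * ring.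
      * rewrite IH. rewrite Cprod_cons. ring.
Qed.

Definition al g u v := Cdiv (wa g (Csub u v)) (wb g (Csub u v)).
Definition be g u v := Copp (Cdiv (wc g (Csub u v)) (wb g (Csub u v))).



Lemma DB g x y mus v s : wb g (Csub x y) <> C0 ->
  Dop g x mus (Bop g y mus v) s =
  Cadd (Cmul (al g x y) (Bop g y mus (Dop g x mus v) s)) (Cmul (be g x y) (Bop g x mus (Dop g y mus v) s)).
Proof.
  intros H. pose proof (DB_rel g x y mus v s) as E. unfold al, be.
  transitivity (Csub (Cdiv (Cadd (Cmul (wb g (Csub x y)) (Dop g x mus (Bop g y mus v) s))
                           (Cmul (wc g (Csub x y)) (Bop g x mus (Dop g y mus v) s))) (wb g (Csub x y)))
                 (Cdiv (Cmul (wc g (Csub x y)) (Bop g x mus (Dop g y mus v) s)) (wb g (Csub x y)))).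
  field; auto. rewrite E. field; auto.
Qed.

Lemma scal_poly g y0 y1 yj :
  Cadd (Cadd (Copp (Cmul (Cmul (Cmul (wa g (Csub y0 y1)) (Csinh g)) (wb g (Csub y1 yj))) (wb g (Csub yj y1))))
             (Cmul (Cmul (Cmul (Csinh g) (Csinh g)) (wb g (Csub y0 yj))) (wb g (Csub yj y1))))
       (Cmul (Cmul (Cmul (Csinh g) (wa g (Csub yj y1))) (wb g (Csub y0 y1))) (wb g (Csub y1 yj))) = C0.
Proof. to_exp. field. nzs. Qed.

Lemma scal_id g y0 y1 yj :
  wb g (Csub y0 y1) <> C0 -> wb g (Csub y0 yj) <> C0 -> wb g (Csub y1 yj) <> C0 -> wb g (Csub yj y1) <> C0 ->
  Cadd (Cmul (al g y0 y1) (be g y0 yj)) (Cmul (be g y0 y1) (be g y1 yj)) = Cmul (be g y0 yj) (al g yj y1).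
Proof.
  intros H1 H2 H3 H4. unfold al, be, wc.
  transitivity (Cadd (Cmul (be g y0 yj) (al g yj y1))
    (Cdiv (Cadd (Cadd (Copp (Cmul (Cmul (Cmul (wa g (Csub y0 y1)) (Csinh g)) (wb g (Csub y1 yj))) (wb g (Csub yj y1))))
             (Cmul (Cmul (Cmul (Csinh g) (Csinh g)) (wb g (Csub y0 yj))) (wb g (Csub yj y1))))
       (Cmul (Cmul (Cmul (Csinh g) (wa g (Csub yj y1))) (wb g (Csub y0 y1))) (wb g (Csub y1 yj))))
     (Cmul (Cmul (Cmul (wb g (Csub y0 y1)) (wb g (Csub y0 yj))) (wb g (Csub y1 yj))) (wb g (Csub yj y1))))).
  - unfold al, be, wc. field. repeat split; auto.
  - rewrite scal_poly. unfold al, be, wc. field. repeat split; auto.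
Qed.


Lemma applyT_Csum {A} g x mus a b (F : A -> V) l s :
  applyT g x mus a b (fun z => Csum (map (fun j => F j z) l)) s = Csum (map (fun j => applyT g x mus a b (F j) s) l).
Proof.
  induction l as [|j l IH]; cbn [map].
  - apply applyT_zero.
  - change (Csum (applyT g x mus a b (F j) s :: map (fun j => applyT g x mus a b (F j) s) l)) with
      (Cadd (applyT g x mus a b (F j) s) (Csum (map (fun j => applyT g x mus a b (F j) s) l))).
    rewrite <- IH. apply (applyT_add g x mus a b (F j) (fun z => Csum (map (fun j => F j z) l))).
Qed.

Lemma Csum_map_cons {A} (F : A -> Cx) a l : Csum (map F (a :: l)) = Cadd (F a) (Csum (map F l)).
Proof. reflexivity. Qed.
Lemma Cprod_map_cons {A} (F : A -> Cx) a l : Cprod (map F (a :: l)) = Cmul (F a) (Cprod (map F l)).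
Proof. reflexivity. Qed.

Section Psi.
Variables (g : Cx) (mus : list Cx).

Definition PsiV (vals : list Cx) : V := fold_right (fun z v => Bop g z mus v) (vac (length mus)) vals.
Definition Psi (y : nat -> Cx) (l : list nat) : V := fold_right (fun k v => Bop g (y k) mus v) (vac (length mus)) l.

Lemma Psi_V y l : Psi y l = PsiV (map y l).
Proof. induction l; simpl; auto. rewrite IHl. reflexivity. Qed.

Lemma PsiV_perm l l' : Permutation l l' -> PsiV l = PsiV l'.
Proof.
  induction 1; simpl; auto.
  - rewrite IHPermutation; auto.
  - extensionality s. apply BB.
  - congruence.
Qed.

Lemma Psi_ext y z l : (forall k, In k l -> y k = z k) -> Psi y l = Psi z l.
Proof. intros H. rewrite !Psi_V. f_equal. apply map_ext_in. auto. Qed.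

Definition dd (u : Cx) := Cprod (map (fun mu => wb g (Csub u mu)) mus).

Lemma filter_all (p : nat -> bool) l : (forall k, In k l -> p k = true) -> filter p l = l.
Proof. induction l; simpl; intros H; auto. rewrite H by auto. rewrite IHl; auto. Qed.

Theorem ABA : forall l (y : nat -> Cx), NoDup l -> ~ In 0%nat l ->
  (forall i j, In i (0%nat :: l) -> In j (0%nat :: l) -> i <> j -> wb g (Csub (y i) (y j)) <> C0) ->
  forall s, Dop g (y 0%nat) mus (Psi y l) s =
  Cadd (Cmul (Cmul (Cprod (map (fun k => al g (y 0%nat) (y k)) l)) (dd (y 0%nat))) (Psi y l s))
       (Csum (map (fun j => Cmul (Cmul (Cmul (be g (y 0%nat) (y j))
                                  (Cprod (map (fun k => al g (y j) (y k)) (filter (fun k => negb (k =? j)) l))))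
                                  (dd (y j))) (Psi (Xrep y j) l s)) l)).
Proof.
  induction l as [|j1 l IH]; intros y Hnd H0 Hb s.
  - unfold Psi; cbn [fold_right map]. rewrite D_vac. unfold dd. rewrite Cprod_nil.
    change (Csum []) with C0. ring.
  - assert (Hndl : NoDup l) by (inversion Hnd; auto).
    assert (Hj1l : ~ In j1 l) by (inversion Hnd; auto).
    assert (Hj10 : j1 <> 0%nat) by (intro E; apply H0; left; auto).
    assert (H0l : ~ In 0%nat l) by (intro E; apply H0; right; auto).
    assert (Hbl : forall i j, In i (0%nat :: l) -> In j (0%nat :: l) -> i <> j -> wb g (Csub (y i) (y j)) <> C0).
    { intros i j Hi Hj; apply Hb; [destruct Hi; [left|right;right]; auto | destruct Hj; [left|right;right]; auto]. }
    set (y' := fun k => if (k =? 0)%nat then y j1 else y k).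
    assert (Hy' : forall k, In k l -> y' k = y k).
    { intros k Hk. unfold y'. destruct (Nat.eqb_spec k 0); [subst; contradiction | reflexivity]. }
    assert (Hbl' : forall i j, In i (0%nat :: l) -> In j (0%nat :: l) -> i <> j -> wb g (Csub (y' i) (y' j)) <> C0).
    { intros i j Hi Hj Hij. unfold y'.
      destruct (Nat.eqb_spec i 0), (Nat.eqb_spec j 0); subst; try congruence.
      - assert (In j l) by (destruct Hj; [congruence| auto]).
        apply Hb; [right; left; auto | right; right; auto | intro; subst; contradiction].
      - assert (In i l) by (destruct Hi; [congruence| auto]).
        apply Hb; [right; right; auto | right; left; auto | intro; subst; contradiction].
      - assert (In j l) by (destruct Hj; [congruence| auto]).
        assert (In i l) by (destruct Hi; [congruence| auto]).
        apply Hb; auto; right; right; auto. }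
    pose proof (IH y' Hndl H0l Hbl') as E2.
    pose proof (IH y Hndl H0l Hbl) as E1.
    rewrite (Psi_ext y' y l Hy') in E2.
    change (y' 0%nat) with (y j1) in E2.
    change (Psi y (j1 :: l)) with (Bop g (y j1) mus (Psi y l)).
    rewrite DB by (apply Hb; [left; auto | right; left; auto | auto]).
    set (A0 := Cprod (map (fun k => al g (y 0%nat) (y k)) l)).
    set (A1 := Cprod (map (fun k => al g (y j1) (y k)) l)).
    set (cj := fun j => Cprod (map (fun k => al g (y j) (y k)) (filter (fun k => negb (k =? j)) l))).
    set (Xj := fun j => Bop g (y j1) mus (Psi (Xrep y j) l) s).
    assert (F1 : Bop g (y j1) mus (Dop g (y 0%nat) mus (Psi y l)) s =
      Cadd (Cmul (Cmul A0 (dd (y 0%nat))) (Bop g (y j1) mus (Psi y l) s))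
           (Csum (map (fun j => Cmul (Cmul (Cmul (be g (y 0%nat) (y j)) (cj j)) (dd (y j))) (Xj j)) l))).
    { unfold Bop. rewrite (applyT_ext g (y j1) mus false true _ _ s E1).
      rewrite applyT_add, applyT_scal, applyT_Csum. f_equal.
      apply Csum_map_ext; intros j Hj. rewrite applyT_scal. reflexivity. }
    assert (F2 : Bop g (y 0%nat) mus (Dop g (y j1) mus (Psi y l)) s =
      Cadd (Cmul (Cmul A1 (dd (y j1))) (Bop g (y 0%nat) mus (Psi y l) s))
           (Csum (map (fun j => Cmul (Cmul (Cmul (be g (y j1) (y j)) (cj j)) (dd (y j))) (Xj j)) l))).
    { unfold Bop. rewrite (applyT_ext g (y 0%nat) mus false true _ _ s E2).
      rewrite applyT_add, applyT_scal, applyT_Csum. f_equal.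
      - f_equal. f_equal. unfold A1. f_equal. apply map_ext_in; intros k Hk. rewrite Hy'; auto.
      - apply Csum_map_ext; intros j Hj. rewrite applyT_scal. 
        assert (Hc : Cprod (map (fun k => al g (y' j) (y' k)) (filter (fun k => negb (k =? j)) l)) = cj j).
        { unfold cj. f_equal. apply map_ext_in. intros k Hk. apply filter_In in Hk. rewrite !Hy'; tauto. }
        rewrite Hc, (Hy' j Hj). f_equal.
        unfold Xj, Bop.
        rewrite !Psi_V.
        change (applyT g (y 0%nat) mus false true (PsiV (map (Xrep y' j) l)) s) with (PsiV (y 0%nat :: map (Xrep y' j) l) s).
        change (applyT g (y j1) mus false true (PsiV (map (Xrep y j) l)) s) with (PsiV (y j1 :: map (Xrep y j) l) s).
        rewrite (PsiV_perm _ (y j1 :: map (Xrep y j) l)); [reflexivity|].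
        destruct (in_split j l) as [l1 [l2 Hl]]; auto.
        assert (Hnj : ~ In j (l1 ++ l2)) by (rewrite Hl in Hndl; eapply NoDup_remove_2; eauto).
        assert (Hm1 : forall z, (forall k, In k l -> z k = y k) -> forall l0, (forall k, In k l0 -> In k l) -> ~ In j l0 ->
                   map (Xrep z j) l0 = map y l0).
        { intros z Hz l0 Hl0 Hj0. apply map_ext_in. intros k Hk. unfold Xrep.
          destruct (Nat.eqb_spec k j); [subst; contradiction | apply Hz; auto]. }
        rewrite Hl, !map_app. cbn [map].
        assert (Xjj : forall z, Xrep z j j = z 0%nat) by (intros; unfold Xrep; rewrite Nat.eqb_refl; auto).
        rewrite !Xjj.
        rewrite (Hm1 y' Hy' l1), (Hm1 y' Hy' l2), (Hm1 y (fun _ _ => eq_refl) l1), (Hm1 y (fun _ _ => eq_refl) l2);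
          try (intros k Hk; rewrite Hl; apply in_or_app; auto; right; right; auto);
          try (intro; apply Hnj; apply in_or_app; auto).
        change (y' 0%nat) with (y j1).
        eapply perm_trans. apply Permutation_middle.
        eapply perm_trans. apply Permutation_app_head. apply perm_swap.
        symmetry. apply Permutation_middle. }
    rewrite F1, F2. rewrite Csum_map_cons, Cprod_map_cons. cbv beta.
    assert (Hf1 : filter (fun k => negb (k =? j1)) (j1 :: l) = l).
    { cbn [filter]. rewrite Nat.eqb_refl. cbn [negb]. apply filter_all.
      intros k Hk. destruct (Nat.eqb_spec k j1); [subst; contradiction | reflexivity]. }
    rewrite Hf1.
    change (Psi (Xrep y j1) (j1 :: l) s) with (Bop g (Xrep y j1 j1) mus (Psi (Xrep y j1) l) s).
    assert (Xjj : Xrep y j1 j1 = y 0%nat) by (unfold Xrep; rewrite Nat.eqb_refl; auto).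
    rewrite Xjj.
    rewrite (Psi_ext (Xrep y j1) y l).
    2:{ intros k Hk. unfold Xrep. destruct (Nat.eqb_spec k j1); [subst; contradiction | reflexivity]. }
    match goal with |- Cadd (Cmul _ (Cadd _ (Csum (map ?P l)))) (Cmul _ (Cadd _ (Csum (map ?Q l)))) =
                       Cadd _ (Cadd _ (Csum (map ?R l))) =>
      assert (HR : Csum (map R l) = Cadd (Cmul (al g (y 0%nat) (y j1)) (Csum (map P l)))
                                         (Cmul (be g (y 0%nat) (y j1)) (Csum (map Q l))))
    end.
    { rewrite <- !Csum_map_scal, <- Csum_map_add. apply Csum_map_ext. intros j Hj. cbv beta.
      assert (Hjj1 : j <> j1) by (intro; subst; contradiction).
      assert (Hj0 : j <> 0%nat) by (intro; subst; contradiction).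
      cbn [filter]. destruct (Nat.eqb_spec j1 j) as [|_]; [congruence|]. cbn [negb].
      rewrite Cprod_map_cons.
      change (Psi (Xrep y j) (j1 :: l) s) with (Bop g (Xrep y j j1) mus (Psi (Xrep y j) l) s).
      assert (Xj1 : Xrep y j j1 = y j1) by (unfold Xrep; destruct (Nat.eqb_spec j1 j); [congruence|auto]).
      rewrite Xj1. fold (cj j). fold (Xj j).
      transitivity (Cmul (Cmul (Cmul (Cmul (be g (y 0%nat) (y j)) (al g (y j) (y j1))) (cj j)) (dd (y j))) (Xj j)).
      { ring. }
      rewrite <- (scal_id g (y 0%nat) (y j1) (y j)).
      - ring.
      - apply Hb; [left | right; left |]; auto.
      - apply Hb; [left | right; right |]; auto.
      - apply Hb; [right; left | right; right |]; auto.
      - apply Hb; [right; right | right; left |]; auto. }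
    rewrite HR. unfold A0, A1. ring.
Qed.
End Psi.

Lemma muList_len L mu : length (muList L mu) = L.
Proof. unfold muList. rewrite length_map, length_seq. reflexivity. Qed.

Lemma Zdw_Psi g L mu y : Zdw g L mu y = Psi g (muList L mu) y (seq 1 L) (repeat true L).
Proof. unfold Zdw, Psi. rewrite muList_len. reflexivity. Qed.

Lemma Zdw_ext g L mu y z : (forall k, (1 <= k <= L)%nat -> y k = z k) -> Zdw g L mu y = Zdw g L mu z.
Proof. intros H. rewrite !Zdw_Psi. rewrite (Psi_ext g (muList L mu) y z); auto.
  intros k Hk. apply in_seq in Hk. apply H. lia. Qed.

Lemma filter_seq0 (p : nat -> bool) L :
  filter p (seq 0 (S L)) = if p 0%nat then 0%nat :: filter p (seq 1 L) else filter p (seq 1 L).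
Proof. reflexivity. Qed.

Lemma mainzero g L mu x :
  (forall i k : nat, (i <= L)%nat -> (k <= L)%nat -> i <> k -> Csinh (Csub (x i) (x k)) <> C0) ->
  Csum (map (fun i => Cmul (rho g L mu x 0 i) (Zdw g L mu (Xrep x i))) (seq 0 (S L))) = C0.
Proof.
  intros Hx.
  assert (HA := ABA g (muList L mu) (seq 1 L) x (seq_NoDup _ _)
             ltac:(intro H; apply in_seq in H; lia)).
  specialize (HA ltac:(intros i j Hi Hj Hij; apply Hx; auto;
      [destruct Hi as [<-|Hi]; [lia| apply in_seq in Hi; lia] | destruct Hj as [<-|Hj]; [lia| apply in_seq in Hj; lia]])
      (repeat true L)).
  pose proof (D_top g (x 0%nat) (muList L mu) (Psi g (muList L mu) x (seq 1 L))) as HD.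
  rewrite muList_len in HD. rewrite HD in HA. clear HD.
  rewrite <- !Zdw_Psi in HA.
  change (seq 0 (S L)) with (0%nat :: seq 1 L). rewrite Csum_map_cons.
  assert (Hr0 : rho g L mu x 0 0 = Csub (Cprod (map (fun mu0 => wa g (Csub (x 0%nat) mu0)) (muList L mu)))
       (Cmul (dd g (muList L mu) (x 0%nat)) (Cprod (map (fun k => al g (x 0%nat) (x k)) (seq 1 L))))).
  { unfold rho, dd, muList. rewrite !map_map. cbn [Nat.eqb]. rewrite filter_seq0. cbn [Nat.eqb negb].
    rewrite filter_all. reflexivity. intros k Hk; apply in_seq in Hk; destruct k; [lia|reflexivity]. }
  assert (Hrj : forall j, In j (seq 1 L) -> rho g L mu x 0 j =
     Copp (Cmul (Cmul (be g (x 0%nat) (x j)) (Cprod (map (fun k => al g (x j) (x k)) (filter (fun k => negb (k =? j)) (seq 1 L)))))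
                (dd g (muList L mu) (x j)))).
  { intros j Hj. apply in_seq in Hj. unfold rho. destruct (Nat.eqb_spec j 0); [lia|].
    rewrite filter_seq0. cbn [Nat.eqb negb]. rewrite Bool.andb_false_r.
    rewrite (filter_ext_in _ (fun k => negb (k =? j))).
    2:{ intros k Hk. apply in_seq in Hk. destruct (Nat.eqb_spec k 0); [lia|]. apply Bool.andb_true_r. }
    unfold be, dd, muList, al, ab. rewrite map_map. ring. }
  match type of HA with _ = Cadd _ (Csum (map ?S _)) =>
    assert (HS : Csum (map (fun i => Cmul (rho g L mu x 0 i) (Zdw g L mu (Xrep x i))) (seq 1 L)) =
                 Cmul (Copp Defs.C1) (Csum (map S (seq 1 L)))) end.
  { rewrite <- Csum_map_scal. apply Csum_map_ext. intros j Hj. rewrite Hrj, Zdw_Psi by auto. ring. }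
  rewrite HS, Hr0, (Zdw_ext g L mu (Xrep x 0) x).
  2:{ intros k Hk. unfold Xrep. destruct (Nat.eqb_spec k 0); [subst; reflexivity | reflexivity]. }
  match type of HA with ?P = Cadd ?Q ?T =>
    transitivity (Csub P (Cadd Q T)) end.
  - unfold dd. ring.
  - rewrite HA. ring.
Qed.


Lemma Csum_perm l l' : Permutation l l' -> Csum l = Csum l'.
Proof. induction 1; cbn [Csum fold_right] in *; auto.
  - unfold Csum in *; cbn; rewrite IHPermutation; auto.
  - unfold Csum; cbn; ring.
  - congruence. Qed.

Lemma Cprod_perm l l' : Permutation l l' -> Cprod l = Cprod l'.
Proof. induction 1; auto.
  - unfold Cprod in *; cbn; rewrite IHPermutation; auto.
  - unfold Cprod; cbn; ring.
  - congruence. Qed.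

Lemma Perm_filter {A} (p : A -> bool) l l' : Permutation l l' -> Permutation (filter p l) (filter p l').
Proof. induction 1; cbn; auto.
  - destruct (p x); auto.
  - destruct (p x), (p y); auto. apply perm_swap.
  - eapply perm_trans; eauto. Qed.

Definition sw (a b k : nat) : nat := if k =? a then b else if k =? b then a else k.

Lemma sw_invol a b k : sw a b (sw a b k) = k.
Proof. unfold sw. destruct (Nat.eqb_spec k a); [|destruct (Nat.eqb_spec k b)]; repeat match goal with |- context [?x =? ?y] => destruct (Nat.eqb_spec x y) end; lia. Qed.

Lemma perm_sw a b l : NoDup l -> In a l -> In b l -> Permutation (map (sw a b) l) l.
Proof.
  intros Hn Ha Hb. apply Permutation_map_same_l.
  - apply Injective_map_NoDup; auto. intros u v E. rewrite <- (sw_invol a b u), E. apply sw_invol.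
  - intros k Hk. apply in_map_iff in Hk. destruct Hk as [k' [<- Hk']]. unfold sw.
    destruct (Nat.eqb_spec k' a); auto. destruct (Nat.eqb_spec k' b); auto.
Qed.

Lemma Cprod_reindex a b l (f : nat -> Cx) (p : nat -> bool) : NoDup l -> In a l -> In b l ->
  Cprod (map (fun k => f (sw a b k)) (filter (fun k => p (sw a b k)) l)) = Cprod (map f (filter p l)).
Proof.
  intros Hn Ha Hb. rewrite <- (map_map (sw a b) f), <- filter_map_swap.
  apply Cprod_perm, Permutation_map, Perm_filter, perm_sw; auto.
Qed.

Lemma Zdw_sw g L mu y a b : (1 <= a <= L)%nat -> (1 <= b <= L)%nat ->
  Zdw g L mu (fun k => y (sw a b k)) = Zdw g L mu y.
Proof.
  intros Ha Hb. rewrite !Zdw_Psi, !Psi_V.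
  rewrite <- (map_map (sw a b) y).
  rewrite (PsiV_perm g (muList L mu) (map y (map (sw a b) (seq 1 L))) (map y (seq 1 L))); auto.
  apply Permutation_map, perm_sw; [apply seq_NoDup | apply in_seq; lia | apply in_seq; lia].
Qed.

Ltac dst := repeat match goal with
 | |- context [?a =? ?b] => first [is_var a | constr_eq a 0%nat]; first [is_var b | constr_eq b 0%nat];
                            destruct (Nat.eqb_spec a b) end.

Section Swap.
Variables (g : Cx) (L : nat) (mu x : nat -> Cx) (m : nat).
Hypothesis Hm : (m <= L)%nat.
Hypothesis Hm0 : m <> 0%nat.
Let x' := fun k => x (sw 0 m k).

Lemma seq0_In k : (k <= L)%nat -> In k (seq 0 (S L)).
Proof. intros; apply in_seq; lia. Qed.

Lemma Z_sw i : (i <= L)%nat -> Zdw g L mu (Xrep x' i) = Zdw g L mu (Xrep x (sw 0 m i)).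
Proof.
  intros Hi.
  destruct (Nat.eq_dec i 0) as [->|Hi0]; [|destruct (Nat.eq_dec i m) as [->|Him]].
  - replace (sw 0 m 0) with m by reflexivity. apply Zdw_ext. intros k Hk.
    unfold Xrep, x', sw. dst; try lia; try congruence.
  - replace (sw 0 m m) with 0%nat by (unfold sw; dst; lia). apply Zdw_ext. intros k Hk.
    unfold Xrep, x', sw. dst; try lia; try congruence.
  - replace (sw 0 m i) with i by (unfold sw; dst; lia).
    rewrite <- (Zdw_sw g L mu (Xrep x i) i m) by lia. apply Zdw_ext. intros k Hk.
    unfold Xrep, x', sw. dst; try lia; try congruence.
Qed.
Lemma rho_sw i : (i <= L)%nat -> rho g L mu x' 0 i = rho g L mu x m (sw 0 m i).
Proof.
  intros Hi. assert (Hx0 : x' 0%nat = x m) by reflexivity.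
  assert (Hxm : x' m = x 0%nat) by (unfold x', sw; dst; congruence).
  assert (HN : NoDup (seq 0 (S L))) by apply seq_NoDup.
  assert (H0in : In 0%nat (seq 0 (S L))) by (apply in_seq; lia).
  assert (Hmin : In m (seq 0 (S L))) by (apply in_seq; lia).
  destruct (Nat.eq_dec i 0) as [->|Hi0]; [|destruct (Nat.eq_dec i m) as [->|Him]].
  - replace (sw 0 m 0) with m by reflexivity. unfold rho. rewrite (Nat.eqb_refl m). cbn [Nat.eqb].
    rewrite Hx0. f_equal. f_equal.
    rewrite <- (Cprod_reindex 0 m (seq 0 (S L)) (fun k => ab g (Csub (x m) (x k))) (fun k => negb (k =? m))) by auto.
    f_equal. f_equal. apply filter_ext. intros k. unfold sw. dst; try lia; reflexivity.
  - replace (sw 0 m m) with 0%nat by (unfold sw; dst; lia). unfold rho.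
    destruct (Nat.eqb_spec m 0); [lia|]. destruct (Nat.eqb_spec 0 m); [lia|]. cbn [Nat.eqb].
    rewrite Hx0, Hxm. f_equal. f_equal.
    rewrite filter_seq0. cbn [Nat.eqb negb]. rewrite Bool.andb_false_r.
    f_equal. rewrite (filter_ext_in _ (fun k => negb (k =? m))).
    2:{ intros k Hk. apply in_seq in Hk. destruct (Nat.eqb_spec k 0); [lia|]. apply Bool.andb_true_r. }
    apply map_ext_in. intros k Hk. apply filter_In in Hk. destruct Hk as [Hk1 Hk2]. apply in_seq in Hk1.
    f_equal. f_equal. unfold x', sw. dst; try lia; try reflexivity.
  - replace (sw 0 m i) with i by (unfold sw; dst; lia). unfold rho.
    destruct (Nat.eqb_spec i 0); [lia|]. destruct (Nat.eqb_spec i m); [lia|].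
    assert (Hxi : x' i = x i) by (unfold x', sw; dst; try lia; reflexivity).
    rewrite Hx0, Hxi. f_equal. f_equal.
    rewrite <- (Cprod_reindex 0 m (seq 0 (S L)) (fun k => ab g (Csub (x i) (x k))) (fun k => negb (k =? i) && negb (k =? m))) by auto.
    f_equal. f_equal. apply filter_ext. intros k. unfold sw. dst; try lia; reflexivity.
Qed.
End Swap.

Theorem corollary6p3 (g : Cx) (L : nat) (mu x : nat -> Cx) :
  (1 <= L)%nat ->
  (forall i k : nat, (i <= L)%nat -> (k <= L)%nat -> i <> k ->
     Csinh (Csub (x i) (x k)) <> C0) ->
  forall m : nat, (m <= L)%nat ->
    Csum (map (fun i => Cmul (rho g L mu x m i) (Zdw g L mu (Xrep x i))) (seq 0 (S L)))
    = C0.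
Proof.
  intros HL Hx m Hm.
  destruct (Nat.eq_dec m 0) as [->|Hm0]. { apply mainzero; auto. }
  assert (Hsw : forall i, (i <= L)%nat -> (sw 0 m i <= L)%nat) by (intros i Hi; unfold sw; dst; lia).
  assert (Hx' : forall i k, (i <= L)%nat -> (k <= L)%nat -> i <> k ->
            Csinh (Csub (x (sw 0 m i)) (x (sw 0 m k))) <> C0).
  { intros i k Hi Hk Hik. apply Hx; auto. intro E. apply Hik.
    rewrite <- (sw_invol 0 m i), E, sw_invol. reflexivity. }
  pose proof (mainzero g L mu (fun k => x (sw 0 m k)) Hx') as H0.
  rewrite <- H0.
  rewrite (Csum_perm _ (map (fun i => Cmul (rho g L mu x m i) (Zdw g L mu (Xrep x i))) (map (sw 0 m) (seq 0 (S L))))).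
  2:{ apply Permutation_map. symmetry. apply perm_sw; [apply seq_NoDup | apply in_seq; lia | apply in_seq; lia]. }
  rewrite map_map. apply Csum_map_ext. intros i Hi. apply in_seq in Hi.
  rewrite (rho_sw g L mu x m Hm Hm0 i), (Z_sw g L mu x m Hm Hm0 i) by lia. reflexivity.
Qed.
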